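(* Let $p>q\ge2$, fix $\arg\mu\in\mathbb{R}$ and $k\in\{0,\dots,r-1\}$, and for $\rho>0$ let $N(\rho)$ be the number of $\theta\in[0,2\pi)$ with $T(\theta;\rho)=0$. If $0<\rho_1<\rho_2$ are such that all zeros of $T(\cdot;\rho_1)$ and of $T(\cdot;\rho_2)$ are simple, then $N(\rho_1)\ge N(\rho_2)$; that is, the number of solutions of $T(\theta;\rho)=0$ is monotone non-increasing in $\rho=|\mu|\in(0,\infty)$.
   Context: Let $r=\gcd(p-1,q-1)$, $A=p^{-1/(p-1)}$, $B=q^{-1/(q-1)}$, $m=\frac{(p-1)(q+1)}{2r}$, $n=\frac{(p+1)(q-1)}{2r}$, $c_k=\frac{1}{p-1}(-2\arg\mu+2\pi k)$, $c_k'=\frac{p+1}{2}c_k$, $C=\frac{(p-1)B}{(q-1)A}>0$, and for $\rho>0$, $T(\theta;\rho)=(-1)^k\rho\sin(n\theta+c_k')+C\sin(m\theta)$. (The zero set of $T(\cdot;\rho)$ is $2\pi$-periodic.) *)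

(* Defs.v *)
From Stdlib Require Import Reals Lra Lia List.
Open Scope R_scope.

Definition rr (p q : nat) : nat := Nat.gcd (p - 1) (q - 1).

Definition AA (p : nat) : R := Rpower (INR p) (- / (INR p - 1)).
Definition BB (q : nat) : R := Rpower (INR q) (- / (INR q - 1)).

Definition mm (p q : nat) : R :=
  (INR p - 1) * (INR q + 1) / (2 * INR (rr p q)).
Definition nn (p q : nat) : R :=
  (INR p + 1) * (INR q - 1) / (2 * INR (rr p q)).

Definition ck (p : nat) (argmu : R) (k : nat) : R :=
  / (INR p - 1) * (-2 * argmu + 2 * PI * INR k).
Definition ck' (p : nat) (argmu : R) (k : nat) : R :=
  (INR p + 1) / 2 * ck p argmu k.

Definition CC (p q : nat) : R :=
  (INR p - 1) * BB q / ((INR q - 1) * AA p).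

Definition T (p q : nat) (argmu : R) (k : nat) (theta rho : R) : R :=
  (-1) ^ k * rho * sin (nn p q * theta + ck' p argmu k)
  + CC p q * sin (mm p q * theta).

Definition all_zeros_simple (p q : nat) (argmu : R) (k : nat) (rho : R) : Prop :=
  forall theta : R, T p q argmu k theta rho = 0 ->
    forall l : R, derivable_pt_lim (fun t => T p q argmu k t rho) theta l -> l <> 0.

Definition num_zeros (p q : nat) (argmu : R) (k : nat) (rho : R) (N : nat) : Prop :=
  exists l : list R, NoDup l /\ length l = N /\
    forall theta : R, In theta l <->
      (0 <= theta < 2 * PI /\ T p q argmu k theta rho = 0).

(* Main.v *)
Require Import Defs.
From Stdlib Require Import Reals Lra Lia List ZArith Classical.
Open Scope R_scope.

Lemma cont_pos (h : R -> R) s : continuity_pt h s -> 0 < h s ->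
  exists d, 0 < d /\ forall t, Rabs (t - s) < d -> 0 < h t.
Proof.
  intros Hc Hs. unfold continuity_pt, continue_in, limit1_in, limit_in in Hc.
  destruct (Hc (h s / 2)) as [al [Hal H]]; [lra|].
  exists al; split; [lra|]. intros t Ht.
  destruct (Req_dec t s) as [->|Hne]; [lra|].
  assert (Hd := H t (conj (conj I (not_eq_sym Hne)) Ht)). simpl in Hd. unfold R_dist in Hd.
  apply Rabs_def2 in Hd. lra.
Qed.

Lemma cont_neg (h : R -> R) s : continuity_pt h s -> h s < 0 ->
  exists d, 0 < d /\ forall t, Rabs (t - s) < d -> h t < 0.
Proof.
  intros Hc Hs. destruct (cont_pos (fun t => - h t) s) as [d [Hd H]].
  - apply continuity_pt_opp; auto.
  - lra.
  - exists d; split; auto. intros t Ht; specialize (H t Ht); lra.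
Qed.

Lemma cont_nz (h : R -> R) s : continuity_pt h s -> h s <> 0 ->
  exists d, 0 < d /\ forall t, Rabs (t - s) < d -> h t <> 0.
Proof.
  intros Hc Hs. destruct (Rlt_or_le (h s) 0) as [Hl|Hl].
  - destruct (cont_neg h s Hc Hl) as [d [Hd H]]; exists d; split; auto; intros t Ht; specialize (H t Ht); lra.
  - destruct (cont_pos h s Hc) as [d [Hd H]]; [lra|]; exists d; split; auto; intros t Ht; specialize (H t Ht); lra.
Qed.

Lemma lim_left_le (h : R -> R) x s : x < s -> continuity_pt h s ->
  (forall t, x <= t < s -> h t <= 0) -> h s <= 0.
Proof.
  intros Hxs Hc H. destruct (Rle_or_lt (h s) 0) as [|Hp]; auto.
  destruct (cont_pos h s Hc Hp) as [d [Hd Hd']].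
  set (t := Rmax x (s - d/2)).
  assert (x <= t < s). { unfold t; split; [apply Rmax_l|]. apply Rmax_lub_lt; lra. }
  assert (0 < h t). { apply Hd'. apply Rabs_def1.
    - lra.
    - assert (s - d/2 <= t) by (unfold t; apply Rmax_r). lra. }
  specialize (H t H0); lra.
Qed.

Lemma lim_right_le (h : R -> R) x s : s < x -> continuity_pt h s ->
  (forall t, s < t <= x -> h t <= 0) -> h s <= 0.
Proof.
  intros Hxs Hc H. destruct (Rle_or_lt (h s) 0) as [|Hp]; auto.
  destruct (cont_pos h s Hc Hp) as [d [Hd Hd']].
  set (t := Rmin x (s + d/2)).
  assert (s < t <= x). { unfold t; split; [apply Rmin_glb_lt; lra|apply Rmin_l]. }
  assert (0 < h t). { apply Hd'. apply Rabs_def1.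
    - assert (t <= s + d/2) by (unfold t; apply Rmin_r). lra.
    - lra. }
  specialize (H t H0); lra.
Qed.

Lemma mvt_pos (h h' : R -> R) u v : u < v ->
  (forall c, u <= c <= v -> derivable_pt_lim h c (h' c)) ->
  (forall c, u < c < v -> 0 < h' c) -> h u < h v.
Proof.
  intros Huv Hd Hp. destruct (MVT_cor2 h h' u v Huv Hd) as [c [Hc1 Hc2]].
  specialize (Hp c Hc2). assert (0 < h' c * (v - u)) by (apply Rmult_lt_0_compat; lra). lra.
Qed.

Lemma mvt_neg (h h' : R -> R) u v : u < v ->
  (forall c, u <= c <= v -> derivable_pt_lim h c (h' c)) ->
  (forall c, u < c < v -> h' c < 0) -> h v < h u.
Proof.
  intros Huv Hd Hp. destruct (MVT_cor2 h h' u v Huv Hd) as [c [Hc1 Hc2]].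
  specialize (Hp c Hc2). assert (h' c * (v - u) < 0).
  { assert (0 < - h' c * (v - u)) by (apply Rmult_lt_0_compat; lra). lra. } lra.
Qed.

Lemma der_cont (h h' : R -> R) : (forall c, derivable_pt_lim h c (h' c)) -> continuity h.
Proof. intros H c. apply derivable_continuous_pt. exists (h' c). apply H. Qed.

Lemma deriv_pos_left (h : R -> R) s l : derivable_pt_lim h s l -> 0 < l -> h s = 0 ->
  exists d, 0 < d /\ forall t, s - d < t < s -> h t < 0.
Proof.
  intros Hd Hl H0. destruct (Hd (l/2)) as [d Hd']; [lra|].
  exists d; split; [apply cond_pos|]. intros t Ht.
  assert (Hne : t - s <> 0) by lra.
  assert (Hab : Rabs (t - s) < d) by (apply Rabs_def1; lra).
  specialize (Hd' (t - s) Hne Hab). replace (s + (t - s)) with t in Hd' by ring.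
  rewrite H0 in Hd'. apply Rabs_def2 in Hd'.
  set (r := (h t - 0) / (t - s)) in *.
  assert (h t = r * (t - s)) by (unfold r; field; auto).
  assert (0 < r * (s - t)) by (apply Rmult_lt_0_compat; lra). nra.
Qed.

Lemma step_left_pos (h h' : R -> R) t d : (forall c, derivable_pt_lim h c (h' c)) -> h t = 0 ->
  (forall c, t - d < c < t -> 0 < h' c) -> forall c, t - d < c < t -> h c < 0.
Proof.
  intros Hd H0 Hp c Hc. assert (h c < h t). { apply (mvt_pos h h'); [lra| intros; apply Hd|].
  intros; apply Hp; lra. } lra.
Qed.

Lemma step_left_neg (h h' : R -> R) t d : (forall c, derivable_pt_lim h c (h' c)) -> h t = 0 ->
  (forall c, t - d < c < t -> h' c < 0) -> forall c, t - d < c < t -> 0 < h c.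
Proof.
  intros Hd H0 Hp c Hc. assert (h t < h c). { apply (mvt_neg h h'); [lra| intros; apply Hd|].
  intros; apply Hp; lra. } lra.
Qed.

Lemma near_pos (h : R -> R) t : continuity_pt h t -> 0 < h t ->
  exists d, 0 < d /\ forall c, t - d < c < t -> 0 < h c.
Proof.
  intros Hc Hp. destruct (cont_pos h t Hc Hp) as [d [Hd H]]. exists d; split; auto.
  intros c Hc'. apply H. apply Rabs_def1; lra.
Qed.

Lemma first_zero (h : R -> R) u v : continuity h -> u < v -> h u <> 0 -> h v = 0 ->
  exists s, u < s <= v /\ h s = 0 /\ forall t, u <= t < s -> h t <> 0.
Proof.
  intros Hc Huv Hu Hv.
  set (E := fun z => u <= z <= v /\ forall t, u <= t <= z -> h t <> 0).
  assert (Hb : bound E). { exists v. intros z [Hz _]. lra. }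
  assert (He : exists z, E z). { exists u. split; [lra|]. intros t Ht. replace t with u by lra. auto. }
  destruct (completeness E Hb He) as [s [Hub Hlub]].
  assert (Hus : u <= s) by (apply Hub; destruct He; unfold E; split; [lra|]; intros t Ht; replace t with u by lra; auto).
  assert (Hsv : s <= v) by (apply Hlub; intros z [Hz _]; lra).
  assert (Hbelow : forall t, u <= t < s -> h t <> 0).
  { intros t Ht. destruct (classic (exists z, E z /\ t <= z)) as [[z [[Hz1 Hz2] Htz]]|Hn].
    - apply Hz2; lra.
    - exfalso. assert (s <= t). { apply Hlub. intros z Hz. destruct (Rle_or_lt z t); auto.
        exfalso; apply Hn; exists z; split; auto; lra. } lra. }
  destruct (cont_nz h u (Hc u) Hu) as [du [Hdu Hdu']].
  assert (Hsu : u < s).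
  { set (z := Rmin v (u + du/2)).
    assert (u < z) by (unfold z; apply Rmin_glb_lt; lra).
    assert (z <= v) by (unfold z; apply Rmin_l).
    assert (z <= u + du/2) by (unfold z; apply Rmin_r).
    assert (E z). { split; [lra|]. intros t Ht. apply Hdu'. apply Rabs_def1; lra. }
    assert (z <= s) by (apply Hub; auto). lra. }
  exists s. split; [lra|]. split; [|auto].
  destruct (Req_dec (h s) 0) as [|Hns]; auto. exfalso.
  assert (s <> v) by (intro; subst; auto).
  destruct (cont_nz h s (Hc s) Hns) as [d [Hd Hd']].
  set (z := Rmin v (s + d/2)).
  assert (s < z) by (unfold z; apply Rmin_glb_lt; lra).
  assert (z <= v) by (unfold z; apply Rmin_l).
  assert (z <= s + d/2) by (unfold z; apply Rmin_r).
  assert (E z). { split; [lra|]. intros t Ht. destruct (Rlt_or_le t s).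
    - apply Hbelow; lra.
    - apply Hd'. apply Rabs_def1; lra. }
  assert (z <= s) by (apply Hub; auto). lra.
Qed.

Lemma const_sign (h : R -> R) u v : continuity h -> u <= v ->
  (forall t, u <= t <= v -> h t <> 0) -> 0 < h u -> forall t, u <= t <= v -> 0 < h t.
Proof.
  intros Hc Huv Hnz Hu t Ht. destruct (Rlt_or_le 0 (h t)) as [|Hle]; auto. exfalso.
  assert (h t < 0) by (assert (h t <> 0) by (apply Hnz; auto); lra).
  assert (u < t) by (destruct (Req_dec u t); [subst; lra| lra]).
  destruct (IVT (fun x => - h x) u t) as [z [Hz1 Hz2]].
  - intro x. apply continuity_pt_opp. apply Hc.
  - auto. - lra. - lra.
  - apply (Hnz z); lra.
Qed.

Lemma const_sign' (h : R -> R) u v : continuity h -> u <= v ->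
  (forall t, u <= t <= v -> h t <> 0) -> forall t, u <= t <= v -> h t * h u > 0.
Proof.
  intros Hc Huv Hnz t Ht. assert (Hu : h u <> 0) by (apply Hnz; lra).
  destruct (Rlt_or_le 0 (h u)).
  - assert (0 < h t) by (apply (const_sign h u v); auto). nra.
  - assert (h u < 0) by lra.
    assert (0 < - h t). { apply (const_sign (fun x => - h x) u v); auto.
      intro x; apply continuity_pt_opp; auto. intros x Hx; specialize (Hnz x Hx); lra. lra. }
    nra.
Qed.

Lemma dext f g x l : (forall t, f t = g t) -> derivable_pt_lim f x l -> derivable_pt_lim g x l.
Proof. intros He H eps Heps. destruct (H eps Heps) as [d Hd]. exists d. intros h Hh Hh'.
  rewrite <- !He. apply Hd; auto. Qed.
Lemma deq f x l l' : derivable_pt_lim f x l -> l = l' -> derivable_pt_lim f x l'.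
Proof. intros H ->; auto. Qed.
Lemma dmul f g x l1 l2 : derivable_pt_lim f x l1 -> derivable_pt_lim g x l2 ->
  derivable_pt_lim (fun t => f t * g t) x (l1 * g x + f x * l2).
Proof. intros; apply (derivable_pt_lim_mult f g x l1 l2); auto. Qed.
Lemma dplus f g x l1 l2 : derivable_pt_lim f x l1 -> derivable_pt_lim g x l2 ->
  derivable_pt_lim (fun t => f t + g t) x (l1 + l2).
Proof. intros; apply (derivable_pt_lim_plus f g x l1 l2); auto. Qed.
Lemma dminus f g x l1 l2 : derivable_pt_lim f x l1 -> derivable_pt_lim g x l2 ->
  derivable_pt_lim (fun t => f t - g t) x (l1 - l2).
Proof. intros; apply (derivable_pt_lim_minus f g x l1 l2); auto. Qed.
Lemma dconst c x : derivable_pt_lim (fun _ => c) x 0.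
Proof. apply derivable_pt_lim_const. Qed.
Lemma dneg f x l : derivable_pt_lim f (-x) l -> derivable_pt_lim (fun t => f (- t)) x (- l).
Proof. intro H. apply deq with (l * -1); [|ring].
  apply (derivable_pt_lim_comp Ropp f x (-1) l); auto.
  apply deq with (-1). apply (derivable_pt_lim_opp id x 1). apply derivable_pt_lim_id. ring. Qed.

Definition Hyp (a a' b b' : R -> R) (n m : R) : Prop :=
  0 < n /\ n < m /\
  (forall t, derivable_pt_lim a t (a' t)) /\ (forall t, derivable_pt_lim a' t (-(n*n) * a t)) /\
  (forall t, derivable_pt_lim b t (b' t)) /\ (forall t, derivable_pt_lim b' t (-(m*m) * b t)) /\
  (forall t, a t = 0 -> a' t <> 0) /\
  (forall j : Z, exists e, (e = 1 \/ e = -1) /\ forall t,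
     a (t + 2*PI*IZR j) = e * a t /\ b (t + 2*PI*IZR j) = e * b t /\
     a' (t + 2*PI*IZR j) = e * a' t /\ b' (t + 2*PI*IZR j) = e * b' t).

Definition Wr (a a' b b' : R -> R) t := a t * b' t - a' t * b t.

Ltac hyp H := destruct H as (Hn & Hnm & Ha & Ha' & Hb & Hb' & Ha0 & Hsh).

Lemma refl_hyp a a' b b' n m : Hyp a a' b b' n m ->
  Hyp (fun t => a (-t)) (fun t => - a' (-t)) (fun t => b (-t)) (fun t => - b' (-t)) n m.
Proof.
  intro H; hyp H. repeat split; auto.
  - intro t. apply dneg; auto.
  - intro t. cbv beta. apply deq with (- (- (-(n*n) * a (- t)))); [|ring].
    apply (dneg (fun u => - a' u)). apply derivable_pt_lim_opp with (f := a'). apply Ha'.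
  - intro t. apply dneg; auto.
  - intro t. cbv beta. apply deq with (- (- (-(m*m) * b (- t)))); [|ring].
    apply (dneg (fun u => - b' u)). apply derivable_pt_lim_opp with (f := b'). apply Hb'.
  - intros t Ht Ht'. apply (Ha0 (-t)); auto; lra.
  - intro j. destruct (Hsh (- j)%Z) as [e [He Hs]]. exists e; split; auto.
    intro t. replace (- (t + 2 * PI * IZR j)) with (- t + 2 * PI * IZR (-j)) by (rewrite opp_IZR; ring).
    destruct (Hs (-t)) as (H1 & H2 & H3 & H4). rewrite H1, H2, H3, H4. repeat split; ring.
Qed.


Lemma W_deriv a a' b b' n m t : Hyp a a' b b' n m ->
  derivable_pt_lim (Wr a a' b b') t ((n*n - m*m) * a t * b t).
Proof. intro H; hyp H. unfold Wr.
  apply deq with ((a' t * b' t + a t * (-(m*m) * b t)) - ((-(n*n) * a t) * b t + a' t * b' t)); [|ring].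
  apply dminus; apply dmul; auto. Qed.

Lemma W1_deriv a a' b b' n m t : Hyp a a' b b' n m ->
  derivable_pt_lim (fun u => (n*n - m*m) * a u * b u) t ((n*n - m*m) * (a' t * b t + a t * b' t)).
Proof. intro H; hyp H.
  apply deq with ((0 * a t + (n*n-m*m) * a' t) * b t + ((n*n-m*m) * a t) * b' t); [|ring].
  apply (dmul (fun u => (n*n-m*m) * a u)); auto. apply (dmul (fun _ => n*n-m*m)); auto. apply dconst. Qed.

Lemma W2_deriv a a' b b' n m t : Hyp a a' b b' n m ->
  derivable_pt_lim (fun u => (n*n - m*m) * (a' u * b u + a u * b' u)) t
     ((n*n - m*m) * (2 * a' t * b' t - (n*n + m*m) * a t * b t)).
Proof. intro H; hyp H.
  apply deq with (0 * (a' t * b t + a t * b' t) + (n*n-m*m) *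
     (((-(n*n) * a t) * b t + a' t * b' t) + (a' t * b' t + a t * (-(m*m) * b t)))); [|ring].
  apply (dmul (fun _ => n*n-m*m) (fun u => a' u * b u + a u * b' u)). apply dconst.
  apply dplus; apply dmul; auto. Qed.

Lemma K_deriv a a' b b' n m r t : Hyp a a' b b' n m ->
  derivable_pt_lim (fun u => a u * (r * a u + b u)) t (2*r*a t*a' t + a' t * b t + a t * b' t).
Proof. intro H; hyp H.
  apply deq with (a' t * (r * a t + b t) + a t * ((0 * a t + r * a' t) + b' t)); [|ring].
  apply (dmul a (fun u => r * a u + b u)); auto. apply (dplus (fun u => r * a u) b); auto.
  apply (dmul (fun _ => r) a); auto. apply dconst. Qed.

Lemma K1_deriv a a' b b' n m r t : Hyp a a' b b' n m ->
  derivable_pt_lim (fun u => 2*r*a u*a' u + a' u * b u + a u * b' u) t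
   (2*r*(a' t*a' t + a t*(-(n*n)*a t)) + (-(n*n)*a t)*b t + 2*a' t*b' t + a t*(-(m*m)*b t)).
Proof. intro H; hyp H.
  apply deq with (((0 * a t + 2*r * a' t) * a' t + (2*r*a t) * (-(n*n) * a t))
     + ((-(n*n)*a t) * b t + a' t * b' t) + (a' t * b' t + a t * (-(m*m) * b t))); [|ring].
  apply dplus; [apply dplus|]; try (apply dmul; auto).
  apply (dmul (fun u => 2*r*a u)); auto. apply (dmul (fun _ => 2*r)); auto. apply dconst. Qed.

Lemma g_deriv a a' b b' n m t : Hyp a a' b b' n m -> a t <> 0 ->
  derivable_pt_lim (fun u => b u / a u) t (Wr a a' b b' t / (a t * a t)).
Proof. intros H Hat; hyp H.
  apply deq with ((b' t * a t - a' t * b t) / (a t)²).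
  - apply (derivable_pt_lim_div b a t); auto.
  - unfold Wr, Rsqr. field. auto.
Qed.

Ltac cont_tac := repeat first [ apply continuity_pt_plus | apply continuity_pt_minus
  | apply continuity_pt_mult | apply continuity_pt_opp | (apply continuity_pt_const; intros ? ?; reflexivity)
  | assumption | auto ].

Lemma hyp_cont a a' b b' n m : Hyp a a' b b' n m ->
  continuity a /\ continuity a' /\ continuity b /\ continuity b' /\ continuity (Wr a a' b b').
Proof. intro H. pose proof H as H0. hyp H0. repeat split.
  - apply (der_cont a a'); auto.
  - apply (der_cont a' (fun t => -(n*n) * a t)); auto.
  - apply (der_cont b b'); auto.
  - apply (der_cont b' (fun t => -(m*m) * b t)); auto.
  - apply (der_cont _ (fun t => (n*n - m*m) * a t * b t)). intro; apply (W_deriv _ _ _ _ n m); auto.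
Qed.

Lemma g_incr a a' b b' n m u v : Hyp a a' b b' n m -> u < v ->
  (forall t, u <= t <= v -> 0 < Wr a a' b b' t /\ a t <> 0) -> b u / a u < b v / a v.
Proof.
  intros H Huv Hp. apply (mvt_pos (fun t => b t / a t) (fun t => Wr a a' b b' t / (a t * a t))); auto.
  - intros c Hc. apply (g_deriv a a' b b' n m); auto. apply Hp; auto.
  - intros c Hc. destruct (Hp c) as [H1 H2]; [lra|]. apply Rdiv_lt_0_compat; auto.
    assert (0 < a c * a c) by (apply Rsqr_pos_lt in H2; unfold Rsqr in H2; auto). auto.
Qed.

Lemma g_decr a a' b b' n m u v : Hyp a a' b b' n m -> u < v ->
  (forall t, u <= t <= v -> Wr a a' b b' t < 0 /\ a t <> 0) -> b v / a v < b u / a u.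
Proof.
  intros H Huv Hp. apply (mvt_neg (fun t => b t / a t) (fun t => Wr a a' b b' t / (a t * a t))); auto.
  - intros c Hc. apply (g_deriv a a' b b' n m); auto. apply Hp; auto.
  - intros c Hc. destruct (Hp c) as [H1 H2]; [lra|].
    assert (0 < a c * a c) by (apply Rsqr_pos_lt in H2; unfold Rsqr in H2; auto).
    unfold Rdiv. assert (0 < / (a c * a c)) by (apply Rinv_0_lt_compat; auto). nra.
Qed.

Lemma right_path a a' b b' n m r1 r2 x : Hyp a a' b b' n m -> 0 < r1 -> r1 < r2 ->
  a x <> 0 -> r2 * a x + b x = 0 -> 0 < Wr a a' b b' x ->
  exists t, x < t /\ r1 * a t + b t = 0 /\ a t <> 0 /\
     forall u, x <= u < t -> 0 < Wr a a' b b' u /\ a u <> 0.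
Proof.
  intros H Hr1 Hr12 Hax HT2 HWx.
  destruct (hyp_cont _ _ _ _ _ _ H) as (Ca & Ca' & Cb & Cb' & CW).
  pose proof H as H0; hyp H0.
  set (Wf := Wr a a' b b') in *.
  set (Hf := fun u => Wf u * a u * (r1 * a u + b u)).
  assert (CH : continuity Hf).
  { unfold Hf. intro u. apply continuity_pt_mult; [apply continuity_pt_mult|]; auto.
    apply continuity_pt_plus; auto. apply continuity_pt_mult; auto. apply continuity_pt_const. intros ? ?; auto. }
  assert (HT1x : r1 * a x + b x <> 0).
  { intro. assert ((r1 - r2) * a x = 0) by lra. apply Rmult_integral in H1. destruct H1; lra. }
  assert (Hfx : Hf x <> 0).
  { unfold Hf. apply Rmult_integral_contrapositive; split; auto.
    apply Rmult_integral_contrapositive; split; auto; lra. }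
  assert (HA : exists v, x < v <= x + 2*PI*IZR 1 /\ Hf v = 0).
  { apply NNPP. intro Hno.
    assert (Hall : forall u, x <= u <= x + 2*PI*IZR 1 -> Hf u <> 0).
    { intros u Hu Hu0. destruct (Req_dec u x) as [->|]; auto. apply Hno. exists u; split; auto; lra. }
    assert (HPI := PI_RGT_0).
    assert (Hlt : x < x + 2*PI*IZR 1) by (simpl; lra).
    assert (Hanz : forall u, x <= u <= x + 2*PI*IZR 1 -> a u <> 0).
    { intros u Hu Hau. apply (Hall u Hu). unfold Hf. rewrite Hau. ring. }
    assert (HWnz : forall u, x <= u <= x + 2*PI*IZR 1 -> Wf u <> 0).
    { intros u Hu Hau. apply (Hall u Hu). unfold Hf. rewrite Hau. ring. }
    assert (HWp : forall u, x <= u <= x + 2*PI*IZR 1 -> 0 < Wf u).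
    { apply (const_sign Wf); auto; lra. }
    assert (Hg := g_incr a a' b b' n m x (x + 2*PI*IZR 1) H Hlt).
    destruct (Hsh 1%Z) as [e [He Hs]]. destruct (Hs x) as (E1 & E2 & _ & _).
    rewrite E1, E2 in Hg.
    assert (Hg' : b x / a x < e * b x / (e * a x)). { apply Hg. intros t Ht; split; auto. }
    replace (e * b x / (e * a x)) with (b x / a x) in Hg' by (field; split; auto; destruct He; lra).
    lra. }
  destruct HA as [v [Hv Hv0]].
  destruct (first_zero Hf x v CH) as [s [Hs [Hs0 Hbel]]]; auto; try lra.
  assert (Hbel_a : forall u, x <= u < s -> a u <> 0).
  { intros u Hu Hau. apply (Hbel u Hu). unfold Hf. rewrite Hau. ring. }
  assert (Hbel_W : forall u, x <= u < s -> 0 < Wf u).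
  { intros u Hu. apply (const_sign Wf x u); auto; try lra.
    intros t Ht Ht0. apply (Hbel t); [lra|]. unfold Hf. rewrite Ht0. ring. }
  set (K := fun u => a u * (r1 * a u + b u)).
  assert (CK : continuity K).
  { unfold K. intro u. apply continuity_pt_mult; auto.
    apply continuity_pt_plus; auto. apply continuity_pt_mult; auto. apply continuity_pt_const. intros ? ?; auto. }
  assert (HKx : K x < 0).
  { unfold K. replace (r1 * a x + b x) with ((r1 - r2) * a x) by lra.
    assert (0 < a x * a x) by (apply Rsqr_pos_lt in Hax; unfold Rsqr in Hax; auto). nra. }
  assert (Hbel_K : forall u, x <= u < s -> K u < 0).
  { intros u Hu. assert (0 < - K u); [|lra].
    apply (const_sign (fun t => - K t) x u); auto; try lra.
    - intro t; apply continuity_pt_opp; auto.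
    - intros t Ht Ht0. apply (Hbel t); [lra|]. unfold Hf. unfold K in Ht0.
      replace (Wf t * a t * (r1 * a t + b t)) with (Wf t * (a t * (r1 * a t + b t))) by ring.
      replace (a t * (r1 * a t + b t)) with 0 by lra. ring. }
  assert (Hbnd : forall u, x <= u < s -> Rabs (b u) - r2 * Rabs (a u) <= 0).
  { intros u Hu.
    assert (Hau := Hbel_a u Hu).
    assert (Hgu : - r2 <= b u / a u).
    { destruct (Req_dec u x) as [->|Hne].
      - replace (b x) with (- r2 * a x) by lra. right. field; auto.
      - left. replace (- r2) with (b x / a x) by (replace (b x) with (- r2 * a x) by lra; field; auto).
        apply (g_incr a a' b b' n m); [auto|lra|]. intros t Ht; split; [apply Hbel_W|apply Hbel_a]; lra. }
    assert (Hgu2 : b u / a u < 0).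
    { assert (Hk := Hbel_K u Hu). unfold K in Hk.
      assert (0 < a u * a u) by (apply Rsqr_pos_lt in Hau; unfold Rsqr in Hau; auto).
      replace (b u / a u) with (K u / (a u * a u) - r1) by (unfold K; field; auto).
      assert (K u / (a u * a u) < 0). { unfold Rdiv. assert (0 < / (a u * a u)) by (apply Rinv_0_lt_compat; auto).
        unfold K. nra. } lra. }
    replace (b u) with ((b u / a u) * a u) by (field; auto).
    rewrite Rabs_mult. rewrite (Rabs_left (b u / a u)) by auto.
    assert (0 <= Rabs (a u)) by apply Rabs_pos. nra. }
  assert (HbndS : Rabs (b s) - r2 * Rabs (a s) <= 0).
  { apply (lim_left_le (fun u => Rabs (b u) - r2 * Rabs (a u)) x s); auto; try lra.
    apply continuity_pt_minus. apply (continuity_pt_comp b Rabs); auto. apply Rcontinuity_abs.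
    apply continuity_pt_mult. apply continuity_pt_const; intros ? ?; auto.
    apply (continuity_pt_comp a Rabs); auto. apply Rcontinuity_abs. }
  assert (HKs : K s <= 0).
  { apply (lim_left_le K x s); auto; try lra. intros u Hu; left; auto. }
  destruct (Req_dec (a s) 0) as [Has|Has].
  -
    exfalso.
    assert (Hbs : b s = 0).
    { rewrite Has, Rabs_R0 in HbndS. assert (0 <= Rabs (b s)) by apply Rabs_pos.
      assert (Rabs (b s) = 0) by lra. destruct (Req_dec (b s) 0) as [|Hn0]; auto; exfalso; apply (Rabs_no_R0 _ Hn0); auto. }
    assert (Ha's := Ha0 s Has).
    set (K1 := fun u => 2*r1*a u*a' u + a' u * b u + a u * b' u).
    set (K2 := fun u => 2*r1*(a' u*a' u + a u*(-(n*n)*a u)) + (-(n*n)*a u)*b u + 2*a' u*b' u + a u*(-(m*m)*b u)).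
    assert (HK2s : K2 s <= 0).
    { destruct (Rle_or_lt (K2 s) 0) as [|Hp]; auto. exfalso.
      assert (CK2 : continuity_pt K2 s) by (unfold K2; cont_tac).
      destruct (near_pos K2 s CK2 Hp) as [d [Hd Hd']].
      assert (HK1 := step_left_pos K1 K2 s d (fun c => K1_deriv a a' b b' n m r1 c H)).
      assert (HK1' : forall c, s - d < c < s -> K1 c < 0).
      { apply HK1; auto. unfold K1. rewrite Has, Hbs. ring. }
      assert (HK0 := step_left_neg K K1 s d (fun c => K_deriv a a' b b' n m r1 c H)).
      assert (HK0' : forall c, s - d < c < s -> 0 < K c).
      { apply HK0; auto. unfold K. rewrite Has. ring. }
      set (u := Rmax x (s - d/2)).
      assert (x <= u) by apply Rmax_l. assert (s - d/2 <= u) by apply Rmax_r.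
      assert (u < s) by (apply Rmax_lub_lt; lra).
      assert (0 < K u) by (apply HK0'; lra). assert (K u < 0) by (apply Hbel_K; lra). lra. }
    unfold K2 in HK2s. rewrite Has, Hbs in HK2s.
    assert (Hsq : 0 < a' s * a' s) by (apply Rsqr_pos_lt in Ha's; unfold Rsqr in Ha's; auto).
    assert (Hab : a' s * b' s < 0) by nra.
    set (W1 := fun u => (n*n - m*m) * a u * b u).
    set (W2 := fun u => (n*n - m*m) * (a' u * b u + a u * b' u)).
    set (W3 := fun u => (n*n - m*m) * (2 * a' u * b' u - (n*n + m*m) * a u * b u)).
    assert (HW3 : 0 < W3 s).
    { unfold W3. rewrite Has, Hbs. assert (n*n - m*m < 0) by nra. nra. }
    assert (CW3 : continuity_pt W3 s) by (unfold W3; cont_tac).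
    destruct (near_pos W3 s CW3 HW3) as [d [Hd Hd']].
    assert (E2 : forall c, s - d < c < s -> W2 c < 0).
    { apply (step_left_pos W2 W3 s d (fun c => W2_deriv a a' b b' n m c H)); auto.
      unfold W2; rewrite Has, Hbs; ring. }
    assert (E1 : forall c, s - d < c < s -> 0 < W1 c).
    { apply (step_left_neg W1 W2 s d (fun c => W1_deriv a a' b b' n m c H)); auto.
      unfold W1; rewrite Has, Hbs; ring. }
    assert (E0 : forall c, s - d < c < s -> Wf c < 0).
    { apply (step_left_pos Wf W1 s d (fun c => W_deriv a a' b b' n m c H)); auto.
      unfold Wf, Wr; rewrite Has, Hbs; ring. }
    set (u := Rmax x (s - d/2)).
    assert (x <= u) by apply Rmax_l. assert (s - d/2 <= u) by apply Rmax_r.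
    assert (u < s) by (apply Rmax_lub_lt; lra).
    assert (Wf u < 0) by (apply E0; lra). assert (0 < Wf u) by (apply Hbel_W; lra). lra.
  - exists s. split; [lra|]. split; [|split; [auto|]].
    + destruct (Req_dec (r1 * a s + b s) 0) as [|HT]; auto. exfalso.
      assert (HWs : Wf s = 0).
      { unfold Hf in Hs0. apply Rmult_integral in Hs0. destruct Hs0 as [Hs0|Hs0]; [|contradiction].
        apply Rmult_integral in Hs0. destruct Hs0; [auto|contradiction]. }
      assert (Hab : a s * b s < 0).
      { unfold K in HKs. assert (0 < a s * a s) by (apply Rsqr_pos_lt in Has; unfold Rsqr in Has; auto). nra. }
      assert (Hd : 0 < (n*n - m*m) * a s * b s).
      { assert (n*n - m*m < 0) by nra. nra. }
      destruct (deriv_pos_left Wf s _ (W_deriv a a' b b' n m s H) Hd HWs) as [d [Hd0 Hd']].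
      set (u := Rmax x (s - d/2)).
      assert (x <= u) by apply Rmax_l. assert (s - d/2 <= u) by apply Rmax_r.
      assert (u < s) by (apply Rmax_lub_lt; lra).
      assert (Wf u < 0) by (apply Hd'; lra). assert (0 < Wf u) by (apply Hbel_W; lra). lra.
    + intros u Hu. split; [apply Hbel_W|apply Hbel_a]; auto.
Qed.

Lemma left_path a a' b b' n m r1 r2 x : Hyp a a' b b' n m -> 0 < r1 -> r1 < r2 ->
  a x <> 0 -> r2 * a x + b x = 0 -> Wr a a' b b' x < 0 ->
  exists t, t < x /\ r1 * a t + b t = 0 /\ a t <> 0 /\
     forall u, t < u <= x -> Wr a a' b b' u < 0 /\ a u <> 0.
Proof.
  intros H Hr1 Hr12 Hax HT2 HW.
  destruct (right_path _ _ _ _ n m r1 r2 (-x) (refl_hyp _ _ _ _ _ _ H) Hr1 Hr12) as [t [H1 [H2 [H3 H4]]]];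
    rewrite ?Ropp_involutive; auto.
  - unfold Wr in *. rewrite Ropp_involutive. lra.
  - exists (-t). split; [lra|]. split; auto. split; auto.
    intros u Hu. destruct (H4 (-u)) as [H5 H6]; [lra|]. rewrite Ropp_involutive in H6.
    unfold Wr in *. rewrite Ropp_involutive in H5. split; [lra|auto].
Qed.

Definition RP a a' b b' r1 x t := x < t /\ r1 * a t + b t = 0 /\ a t <> 0 /\
  forall u, x <= u < t -> 0 < Wr a a' b b' u /\ a u <> 0.
Definition LP a a' b b' r1 x t := t < x /\ r1 * a t + b t = 0 /\ a t <> 0 /\
  forall u, t < u <= x -> Wr a a' b b' u < 0 /\ a u <> 0.

Lemma shiftW a a' b b' n m (j : Z) : Hyp a a' b b' n m -> exists e, (e = 1 \/ e = -1) /\ forall t,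
  a (t + 2*PI*IZR j) = e * a t /\ b (t + 2*PI*IZR j) = e * b t /\
  a' (t + 2*PI*IZR j) = e * a' t /\ b' (t + 2*PI*IZR j) = e * b' t /\
  Wr a a' b b' (t + 2*PI*IZR j) = Wr a a' b b' t.
Proof. intro H; hyp H. destruct (Hsh j) as [e [He Hs]]. exists e; split; auto.
  intro t. destruct (Hs t) as (H1 & H2 & H3 & H4). repeat split; auto.
  unfold Wr. rewrite H1, H2, H3, H4. transitivity (e*e*(a t * b' t - a' t * b t)); [ring|]. destruct He as [-> | ->]; ring.
Qed.

Lemma shift_at a a' b b' n m (j : Z) u : Hyp a a' b b' n m -> exists e, (e = 1 \/ e = -1) /\
  a u = e * a (u - 2*PI*IZR j) /\ b u = e * b (u - 2*PI*IZR j) /\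
  a' u = e * a' (u - 2*PI*IZR j) /\ b' u = e * b' (u - 2*PI*IZR j) /\
  Wr a a' b b' u = Wr a a' b b' (u - 2*PI*IZR j).
Proof. intro H. destruct (shiftW a a' b b' n m j H) as [e [He Hs]]. exists e; split; auto.
  destruct (Hs (u - 2*PI*IZR j)) as (H1 & H2 & H3 & H4 & H5).
  replace (u - 2*PI*IZR j + 2*PI*IZR j) with u in * by ring. auto. Qed.

Lemma e_nz e : (e = 1 \/ e = -1) -> e <> 0.
Proof. intros [->| ->]; lra. Qed.

Lemma RP_shift a a' b b' n m r1 x t j : Hyp a a' b b' n m -> RP a a' b b' r1 x t ->
  RP a a' b b' r1 (x + 2*PI*IZR j) (t + 2*PI*IZR j).
Proof. intros H (H1 & H2 & H3 & H4). destruct (shiftW a a' b b' n m j H) as [e [He Hs]].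
  assert (Hne := e_nz e He).
  destruct (Hs t) as (E1 & E2 & _ & _ & _). split; [lra|]. split.
  { rewrite E1, E2. replace (r1 * (e * a t) + e * b t) with (e * (r1 * a t + b t)) by ring. rewrite H2; ring. }
  split. { rewrite E1. apply Rmult_integral_contrapositive; auto. }
  intros u Hu. destruct (shift_at a a' b b' n m j u H) as [e' [He' (F1 & _ & _ & _ & F5)]].
  destruct (H4 (u - 2*PI*IZR j)) as [G1 G2]; [lra|]. rewrite F5, F1. split; auto.
  apply Rmult_integral_contrapositive; split; auto. apply e_nz; auto.
Qed.

Lemma LP_shift a a' b b' n m r1 x t j : Hyp a a' b b' n m -> LP a a' b b' r1 x t ->
  LP a a' b b' r1 (x + 2*PI*IZR j) (t + 2*PI*IZR j).
Proof. intros H (H1 & H2 & H3 & H4). destruct (shiftW a a' b b' n m j H) as [e [He Hs]].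
  assert (Hne := e_nz e He).
  destruct (Hs t) as (E1 & E2 & _ & _ & _). split; [lra|]. split.
  { rewrite E1, E2. replace (r1 * (e * a t) + e * b t) with (e * (r1 * a t + b t)) by ring. rewrite H2; ring. }
  split. { rewrite E1. apply Rmult_integral_contrapositive; auto. }
  intros u Hu. destruct (shift_at a a' b b' n m j u H) as [e' [He' (F1 & _ & _ & _ & F5)]].
  destruct (H4 (u - 2*PI*IZR j)) as [G1 G2]; [lra|]. rewrite F5, F1. split; auto.
  apply Rmult_integral_contrapositive; split; auto. apply e_nz; auto.
Qed.

Lemma W_at_zero a a' b b' r x : r * a x + b x = 0 -> Wr a a' b b' x = a x * (r * a' x + b' x).
Proof. intro H. unfold Wr. replace (b x) with (- r * a x) by lra. ring. Qed.

Lemma paths_same a a' b b' n m r1 r2 x1 x2 t : Hyp a a' b b' n m -> 0 < r1 -> r1 < r2 ->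
  (forall th, r1 * a th + b th = 0 -> r1 * a' th + b' th <> 0) ->
  r2 * a x1 + b x1 = 0 -> r2 * a x2 + b x2 = 0 ->
  (RP a a' b b' r1 x1 t \/ LP a a' b b' r1 x1 t) ->
  (RP a a' b b' r1 x2 t \/ LP a a' b b' r1 x2 t) -> x1 = x2.
Proof.
  intros H Hr1 Hr12 Hs1 Z1 Z2 P1 P2.
  destruct (hyp_cont _ _ _ _ _ _ H) as (Ca & Ca' & Cb & Cb' & CW).
  destruct (Req_dec x1 x2) as [|Hne]; auto. exfalso.
  assert (Hg : forall x, a x <> 0 -> r2 * a x + b x = 0 -> b x / a x = - r2).
  { intros x Hx Zx. replace (b x) with (- r2 * a x) by lra. field; auto. }
  assert (Wt : forall x, RP a a' b b' r1 x t \/ LP a a' b b' r1 x t -> Wr a a' b b' t <> 0).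
  { intros x [(_ & T & A & _)|(_ & T & A & _)]; rewrite (W_at_zero a a' b b' r1 t T);
    apply Rmult_integral_contrapositive; split; auto. }
  assert (B1 : a x1 <> 0) by (destruct P1 as [(R1 & T1 & A1 & Q1)|(L1 & T1 & A1 & Q1)]; apply (Q1 x1); lra).
  assert (B2 : a x2 <> 0) by (destruct P2 as [(R1 & T1 & A1 & Q1)|(L1 & T1 & A1 & Q1)]; apply (Q1 x2); lra).
  destruct P1 as [(R1 & T1 & A1 & Q1)|(L1 & T1 & A1 & Q1)];
  destruct P2 as [(R2 & T2 & A2 & Q2)|(L2 & T2 & A2 & Q2)].
  - destruct (Rlt_or_le x1 x2).
    + assert (b x1 / a x1 < b x2 / a x2). { apply (g_incr a a' b b' n m); auto. intros u Hu; apply Q1; lra. }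
      rewrite (Hg x1), (Hg x2) in H1; auto; lra.
    + assert (b x2 / a x2 < b x1 / a x1). { apply (g_incr a a' b b' n m); try lra; auto. intros u Hu; apply Q2; lra. }
      rewrite (Hg x1), (Hg x2) in H1; auto; lra.
  - assert (Wr a a' b b' t <= 0). { apply (lim_right_le _ x2 t); auto. intros u Hu. left; apply Q2; lra. }
    assert (- Wr a a' b b' t <= 0). { apply (lim_left_le (fun u => - Wr a a' b b' u) x1 t); auto.
      apply continuity_pt_opp; auto. intros u Hu. assert (0 < Wr a a' b b' u) by (apply Q1; lra). lra. }
    apply (Wt x1); [left; exact (conj R1 (conj T1 (conj A1 Q1)))|lra].
  - assert (Wr a a' b b' t <= 0). { apply (lim_right_le _ x1 t); auto. intros u Hu. left; apply Q1; lra. }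
    assert (- Wr a a' b b' t <= 0). { apply (lim_left_le (fun u => - Wr a a' b b' u) x2 t); auto.
      apply continuity_pt_opp; auto. intros u Hu. assert (0 < Wr a a' b b' u) by (apply Q2; lra). lra. }
    apply (Wt x1); [right; exact (conj L1 (conj T1 (conj A1 Q1)))|lra].
  - destruct (Rlt_or_le x1 x2).
    + assert (b x2 / a x2 < b x1 / a x1). { apply (g_decr a a' b b' n m); auto. intros u Hu; apply Q2; lra. }
      rewrite (Hg x1), (Hg x2) in H1; auto; lra.
    + assert (b x1 / a x1 < b x2 / a x2). { apply (g_decr a a' b b' n m); try lra; auto. intros u Hu; apply Q1; lra. }
      rewrite (Hg x1), (Hg x2) in H1; auto; lra.
Qed.

Lemma inj_len (Rel : R -> R -> Prop) (l2 : list R) : NoDup l2 -> forall l1 : list R,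
  (forall x, In x l2 -> exists y, In y l1 /\ Rel x y) ->
  (forall x1 x2 y, In x1 l2 -> In x2 l2 -> Rel x1 y -> Rel x2 y -> x1 = x2) ->
  (length l2 <= length l1)%nat.
Proof.
  induction 1 as [|x l2 Hx Hnd IH]; intros l1 Hex Hinj; simpl; [lia|].
  destruct (Hex x (or_introl eq_refl)) as [y [Hy HR]].
  assert (Hlt := remove_length_lt Req_dec_T l1 y Hy).
  assert (length l2 <= length (remove Req_dec_T y l1))%nat; [|lia].
  apply IH.
  - intros x' Hx'. destruct (Hex x' (or_intror Hx')) as [y' [Hy' HR']]. exists y'. split; auto.
    apply in_in_remove; auto. intro; subst y'. assert (x' = x) by (apply (Hinj x' x y); simpl; auto).
    subst; contradiction.
  - intros; apply (Hinj x1 x2 y0); simpl; auto.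
Qed.

Lemma same_class x x' j : 0 <= x < 2*PI -> 0 <= x' < 2*PI -> x' = x + 2*PI*IZR j -> x = x'.
Proof.
  intros H1 H2 H3. assert (HPI := PI_RGT_0).
  assert (Hj : -1 < IZR j < 1).
  { split.
    - apply Rmult_lt_reg_l with (2*PI); lra.
    - apply Rmult_lt_reg_l with (2*PI); lra. }
  destruct Hj as [Hj1 Hj2]. apply lt_IZR in Hj1. apply lt_IZR in Hj2. assert (Hj0 : j = 0%Z) by lia. rewrite Hj0 in H3. simpl in H3. lra.
Qed.

Lemma reduce t : exists j y, 0 <= y < 2*PI /\ t = y + 2*PI*IZR j.
Proof.
  assert (HPI := PI_RGT_0).
  destruct (archimed (t / (2*PI))) as [H1 H2].
  exists (up (t / (2*PI)) - 1)%Z. exists (t - 2*PI*IZR (up (t / (2*PI)) - 1)).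
  rewrite minus_IZR. split; [|ring].
  set (u := IZR (up (t / (2 * PI)))) in *.
  assert (t = (t / (2*PI)) * (2*PI)) by (field; lra).
  split; nra.
Qed.

Definition Rel a a' b b' r1 x y :=
  (a x = 0 /\ y = x) \/ exists j t, t = y + 2*PI*IZR j /\
    (RP a a' b b' r1 x t \/ LP a a' b b' r1 x t).

Theorem count_generic a a' b b' n m r1 r2 l1 l2 : Hyp a a' b b' n m -> 0 < r1 -> r1 < r2 ->
  (forall th, r1 * a th + b th = 0 -> r1 * a' th + b' th <> 0) ->
  (forall th, r2 * a th + b th = 0 -> r2 * a' th + b' th <> 0) ->
  NoDup l2 ->
  (forall th, In th l1 <-> 0 <= th < 2*PI /\ r1 * a th + b th = 0) ->
  (forall th, In th l2 <-> 0 <= th < 2*PI /\ r2 * a th + b th = 0) ->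
  (length l2 <= length l1)%nat.
Proof.
  intros H Hr1 Hr12 S1 S2 Hnd L1 L2.
  apply (inj_len (Rel a a' b b' r1) l2 Hnd l1).
  - intros x Hx. apply L2 in Hx. destruct Hx as [Hx Zx].
    destruct (Req_dec (a x) 0) as [Ha|Ha].
    + exists x. split; [apply L1; split; auto; rewrite Ha in *; lra|]. left; auto.
    + assert (HW : Wr a a' b b' x <> 0).
      { rewrite (W_at_zero a a' b b' r2 x Zx). apply Rmult_integral_contrapositive; split; auto. }
      assert (Hpath : exists t, RP a a' b b' r1 x t \/ LP a a' b b' r1 x t).
      { destruct (Rlt_or_le 0 (Wr a a' b b' x)).
        - destruct (right_path a a' b b' n m r1 r2 x H Hr1 Hr12 Ha Zx H0) as [t Ht]. exists t; left; exact Ht.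
        - destruct (left_path a a' b b' n m r1 r2 x H Hr1 Hr12 Ha Zx) as [t Ht]; [lra|]. exists t; right; exact Ht. }
      destruct Hpath as [t Hp].
      destruct (reduce t) as [j [y [Hy Ht]]].
      exists y. split.
      * apply L1. split; auto.
        assert (T1t : r1 * a t + b t = 0) by (destruct Hp as [(_&T&_)|(_&T&_)]; auto).
        destruct (shiftW a a' b b' n m j H) as [e [He Hs]]. destruct (Hs y) as (E1 & E2 & _).
        rewrite <- Ht in E1, E2. rewrite E1, E2 in T1t.
        assert (e * (r1 * a y + b y) = 0) by lra. apply Rmult_integral in H0.
        destruct H0; auto. exfalso; apply (e_nz e He); auto.
      * right. exists j, t. split; auto.
  - intros x1 x2 y Hx1 Hx2 R1 R2. apply L2 in Hx1. apply L2 in Hx2.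
    destruct Hx1 as [I1 Z1]. destruct Hx2 as [I2 Z2].
    assert (Hcp : forall x x', a x = 0 -> y = x -> (exists j t, t = y + 2*PI*IZR j /\
               (RP a a' b b' r1 x' t \/ LP a a' b b' r1 x' t)) -> False).
    { intros x x' Hax Hy [j [t [Ht Hp]]].
      assert (At : a t <> 0) by (destruct Hp as [(_&_&A&_)|(_&_&A&_)]; auto).
      destruct (shiftW a a' b b' n m j H) as [e [He Hs]]. destruct (Hs y) as (E1 & _).
      rewrite <- Ht in E1. subst y. rewrite Hax in E1. apply At. rewrite E1; ring. }
    destruct R1 as [[A1 Y1]|P1]; destruct R2 as [[A2 Y2]|P2].
    + congruence.
    + exfalso. apply (Hcp x1 x2); auto.
    + exfalso. apply (Hcp x2 x1); auto.
    + destruct P1 as [j1 [t1 [Ht1 P1]]]. destruct P2 as [j2 [t2 [Ht2 P2]]].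
      set (j := (j1 - j2)%Z).
      assert (Et : t2 + 2*PI*IZR j = t1) by (unfold j; rewrite minus_IZR; lra).
      assert (P2' : RP a a' b b' r1 (x2 + 2*PI*IZR j) t1 \/ LP a a' b b' r1 (x2 + 2*PI*IZR j) t1).
      { rewrite <- Et. destruct P2; [left; apply (RP_shift a a' b b' n m); auto|right; apply (LP_shift a a' b b' n m); auto]. }
      assert (Z2' : r2 * a (x2 + 2*PI*IZR j) + b (x2 + 2*PI*IZR j) = 0).
      { destruct (shiftW a a' b b' n m j H) as [e [He Hs]]. destruct (Hs x2) as (E1 & E2 & _).
        rewrite E1, E2. replace (r2 * (e * a x2) + e * b x2) with (e * (r2 * a x2 + b x2)) by ring.
        rewrite Z2; ring. }
      assert (Heq := paths_same a a' b b' n m r1 r2 x1 (x2 + 2*PI*IZR j) t1 H Hr1 Hr12 S1 Z1 Z2' P1 P2').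
      symmetry. apply (same_class x2 x1 j); auto.
Qed.

Lemma finite_zeros (h : R -> R) u v : continuity h ->
  (forall z, h z = 0 -> exists d, 0 < d /\ forall t, 0 < Rabs (t - z) < d -> h t <> 0) ->
  u <= v -> exists l, forall t, u <= t <= v -> h t = 0 -> In t l.
Proof.
  intros Hc Hiso Huv.
  set (P := fun z => exists l, forall t, u <= t <= z -> h t = 0 -> In t l).
  set (E := fun z => u <= z <= v /\ P z).
  assert (Pu : P u). { exists (u :: nil). intros t Ht _. left; lra. }
  assert (Pmono : forall z z', z' <= z -> P z -> P z').
  { intros z z' Hz [l Hl]. exists l. intros t Ht; apply Hl; lra. }
  assert (Hb : bound E) by (exists v; intros z [Hz _]; lra).
  assert (He : exists z, E z) by (exists u; split; [lra|auto]).
  destruct (completeness E Hb He) as [s [Hub Hlub]].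
  assert (Hus : u <= s) by (apply Hub; split; [lra|auto]).
  assert (Hsv : s <= v) by (apply Hlub; intros z [Hz _]; lra).
  assert (Hnb : exists d, 0 < d /\ forall t, 0 < Rabs (t - s) < d -> h t <> 0).
  { destruct (Req_dec (h s) 0) as [Hz|Hz]; auto.
    destruct (cont_nz h s (Hc s) Hz) as [d [Hd Hd']]. exists d; split; auto. intros t Ht; apply Hd'; lra. }
  destruct Hnb as [d [Hd Hd']].
  assert (Hz : exists z, E z /\ s - d < z).
  { apply NNPP. intro Hn. assert (s <= s - d); [|lra]. apply Hlub. intros z Ez.
    destruct (Rle_or_lt z (s - d)); auto. exfalso; apply Hn; exists z; auto. }
  destruct Hz as [z [[Hz1 [l Hl]] Hz2]].
  set (z' := Rmin v (s + d/2)).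
  assert (Hz'1 : z' <= v) by apply Rmin_l. assert (Hz'2 : z' <= s + d/2) by apply Rmin_r.
  assert (Hz'3 : s <= z') by (apply Rmin_glb; lra).
  assert (Pz' : P z').
  { exists (s :: l). intros t Ht Ht0. destruct (Rle_or_lt t z) as [Htz|Htz].
    - right; apply Hl; auto; lra.
    - destruct (Req_dec t s) as [->|Hne]; [left; auto|]. exfalso. apply (Hd' t); auto.
      split; [apply Rabs_pos_lt; lra|apply Rabs_def1; lra]. }
  assert (Hs_eq : z' <= s) by (apply Hub; split; [lra|auto]).
  assert (Hsv' : s = v).
  { destruct (Req_dec s v); auto. assert (z' = Rmin v (s + d/2)) by auto.
    assert (s < z'). { unfold z'. apply Rmin_glb_lt; lra. } lra. }
  subst s. assert (z' = v) by lra. rewrite <- H. auto.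
Qed.

Definition inI (h : R -> R) (t : R) : bool :=
  if Rle_dec 0 t then if Rlt_dec t (2*PI) then if Req_dec_T (h t) 0 then true else false
  else false else false.

Lemma exact_list (h : R -> R) (L : list R) :
  (forall t, 0 <= t <= 2*PI -> h t = 0 -> In t L) ->
  exists l, NoDup l /\ forall t, In t l <-> (0 <= t < 2*PI /\ h t = 0).
Proof.
  intro HL. exists (nodup Req_dec_T (filter (inI h) L)). split; [apply NoDup_nodup|].
  intro t. rewrite nodup_In, filter_In. unfold inI. split.
  - intros [_ Hb]. destruct (Rle_dec 0 t); [|discriminate]. destruct (Rlt_dec t (2*PI)); [|discriminate].
    destruct (Req_dec_T (h t) 0); [|discriminate]. auto.
  - intros [[H1 H2] H3]. split; [apply HL; auto; lra|].
    destruct (Rle_dec 0 t); [|contradiction]. destruct (Rlt_dec t (2*PI)); [|contradiction].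
    destruct (Req_dec_T (h t) 0); auto.
Qed.
From Coquelicot Require Import Coquelicot.
Open Scope R_scope.

Lemma sin2Z x k : sin (x + 2 * IZR k * PI) = sin x /\ cos (x + 2 * IZR k * PI) = cos x.
Proof.
  destruct k as [|p|p].
  - simpl. split; f_equal; ring.
  - rewrite <- (positive_nat_Z p), <- INR_IZR_INZ. split; [apply sin_period|apply cos_period].
  - replace (IZR (Z.neg p)) with (- INR (Pos.to_nat p)) by
      (rewrite INR_IZR_INZ, positive_nat_Z; simpl; rewrite <- Pos2Z.opp_pos, opp_IZR; auto).
    set (y := x + 2 * - INR (Pos.to_nat p) * PI).
    replace x with (y + 2 * INR (Pos.to_nat p) * PI) at 1 2 by (unfold y; ring).
    rewrite sin_period, cos_period. auto.
Qed.

Lemma sinZ K : exists e, (e = 1 \/ e = -1) /\ forall x,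
  sin (x + IZR K * PI) = e * sin x /\ cos (x + IZR K * PI) = e * cos x.
Proof.
  destruct (Z.Even_or_Odd K) as [[k Hk]|[k Hk]]; subst K.
  - exists 1. split; [auto|]. intro x. rewrite mult_IZR. replace (IZR 2 * IZR k * PI) with (2 * IZR k * PI) by (simpl; ring).
    destruct (sin2Z x k). split; lra.
  - exists (-1). split; [auto|]. intro x. rewrite plus_IZR, mult_IZR.
    replace (x + (IZR 2 * IZR k + IZR 1) * PI) with ((x + PI) + 2 * IZR k * PI) by (simpl; ring).
    destruct (sin2Z (x + PI) k) as [E1 E2]. rewrite E1, E2, neg_sin, neg_cos. split; ring.
Qed.

Definition aF p argmu k q t := (-1)^k * sin (nn p q * t + ck' p argmu k).
Definition aF' p argmu k q t := (-1)^k * (nn p q * cos (nn p q * t + ck' p argmu k)).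
Definition bF p q t := CC p q * sin (mm p q * t).
Definition bF' p q t := CC p q * (mm p q * cos (mm p q * t)).

Lemma arith p q : (2 <= q)%nat -> (q < p)%nat ->
  exists Na Nb : nat, 2 * nn p q = INR Na /\ 2 * mm p q = INR Nb /\ (0 < Na)%nat /\ (Na < Nb)%nat /\
   exists d : Z, Z.of_nat Nb = (Z.of_nat Na + 2 * d)%Z.
Proof.
  intros Hq Hp.
  destruct (Nat.gcd_divide_l (p-1) (q-1)) as [P' HP]. destruct (Nat.gcd_divide_r (p-1) (q-1)) as [Q' HQ].
  fold (rr p q) in HP, HQ. set (r := rr p q) in *.
  assert (Hr : r <> 0%nat). { intro H0. rewrite H0 in HP. lia. }
  exists ((p+1)*Q')%nat, (P'*(q+1))%nat.
  assert (Er : 0 < INR r) by (apply lt_0_INR; lia).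
  assert (EP : INR p - 1 = INR P' * INR r).
  { rewrite <- mult_INR, <- HP, minus_INR by lia. simpl. ring. }
  assert (EQ : INR q - 1 = INR Q' * INR r).
  { rewrite <- mult_INR, <- HQ, minus_INR by lia. simpl. ring. }
  unfold nn, mm. fold r. rewrite !mult_INR, !plus_INR. simpl (INR 1).
  split; [rewrite EQ; field; lra|].
  split; [rewrite EP; field; lra|].
  split; [nia|]. split; [nia|].
  exists (Z.of_nat P' - Z.of_nat Q')%Z. nia.
Qed.

Lemma concrete_hyp p q argmu k : (2 <= q)%nat -> (q < p)%nat ->
  Hyp (aF p argmu k q) (aF' p argmu k q) (bF p q) (bF' p q) (nn p q) (mm p q).
Proof.
  intros Hq Hp. destruct (arith p q Hq Hp) as (Na & Nb & HNa & HNb & Hpos & Hlt & d & Hd).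
  assert (Hn : 0 < nn p q) by (assert (0 < INR Na) by (apply lt_0_INR; lia); lra).
  assert (Hnm : nn p q < mm p q) by (assert (INR Na < INR Nb) by (apply lt_INR; lia); lra).
  unfold Hyp, aF, aF', bF, bF'. split; [auto|]. split; [auto|].
  split; [intro t; apply is_derive_Reals; auto_derive; auto; ring|].
  split; [intro t; apply is_derive_Reals; auto_derive; auto; ring|].
  split; [intro t; apply is_derive_Reals; auto_derive; auto; ring|].
  split; [intro t; apply is_derive_Reals; auto_derive; auto; ring|].
  split.
  - intros t Ht Ht'. assert (Hk : (-1)^k <> 0) by (apply pow_nonzero; lra).
    apply Rmult_integral in Ht. destruct Ht as [Ht|Ht]; [contradiction|].
    apply Rmult_integral in Ht'. destruct Ht' as [Ht'|Ht']; [contradiction|].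
    apply Rmult_integral in Ht'. destruct Ht' as [Ht'|Ht']; [lra|].
    assert (E := sin2_cos2 (nn p q * t + ck' p argmu k)). rewrite Ht, Ht' in E. unfold Rsqr in E. lra.
  - intro j. destruct (sinZ (j * Z.of_nat Na)) as [e [He Hs]]. exists e. split; auto. intro t.
    assert (Ea : forall c, nn p q * (t + 2 * PI * IZR j) + c = (nn p q * t + c) + IZR (j * Z.of_nat Na) * PI).
    { intro c. rewrite mult_IZR, <- INR_IZR_INZ, <- HNa. ring. }
    assert (Eb : mm p q * (t + 2 * PI * IZR j) = (mm p q * t + IZR (j * Z.of_nat Na) * PI) + 2 * IZR (j * d) * PI).
    { rewrite !mult_IZR, <- INR_IZR_INZ. replace (INR Na) with (IZR (Z.of_nat Nb) - 2 * IZR d).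
      rewrite <- INR_IZR_INZ, <- HNb. ring. rewrite Hd, plus_IZR, mult_IZR, <- INR_IZR_INZ. simpl. ring. }
    rewrite !Ea, !Eb. destruct (sin2Z (mm p q * t + IZR (j * Z.of_nat Na) * PI) (j * d)) as [F1 F2].
    rewrite F1, F2. destruct (Hs (nn p q * t + ck' p argmu k)) as [G1 G2].
    destruct (Hs (mm p q * t)) as [G3 G4]. rewrite G1, G2, G3, G4. repeat split; ring.
Qed.

Lemma iso_zero (h : R -> R) z l : derivable_pt_lim h z l -> l <> 0 -> h z = 0 ->
  exists d, 0 < d /\ forall t, 0 < Rabs (t - z) < d -> h t <> 0.
Proof.
  intros Hd Hl H0. destruct (Hd (Rabs l / 2)) as [d Hd']; [apply Rabs_pos_lt in Hl; lra|].
  exists d; split; [apply cond_pos|]. intros t [Ht1 Ht2] Hht.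
  assert (Hne : t - z <> 0) by (intro E; rewrite E, Rabs_R0 in Ht1; lra).
  specialize (Hd' (t - z) Hne Ht2). replace (z + (t - z)) with t in Hd' by ring.
  rewrite Hht, H0 in Hd'. replace ((0 - 0) / (t - z) - l) with (- l) in Hd' by (field; auto).
  rewrite Rabs_Ropp in Hd'. apply Rabs_pos_lt in Hl. lra.
Qed.

Lemma zero_list p q argmu k rho : (2 <= q)%nat -> (q < p)%nat ->
  all_zeros_simple p q argmu k rho ->
  exists l, NoDup l /\ forall t, In t l <-> (0 <= t < 2*PI /\ T p q argmu k t rho = 0).
Proof.
  intros Hq Hp Hs.
  assert (Hd : forall t, derivable_pt_lim (fun u => T p q argmu k u rho) t (rho * aF' p argmu k q t + bF' p q t)).
  { intro t. unfold T, aF', bF'. apply is_derive_Reals. auto_derive; auto. ring. }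
  assert (HPI := PI_RGT_0).
  destruct (finite_zeros (fun u => T p q argmu k u rho) 0 (2*PI)) as [L HL].
  - apply (der_cont _ (fun t => rho * aF' p argmu k q t + bF' p q t)). auto.
  - intros z Hz. apply (iso_zero _ z (rho * aF' p argmu k q z + bF' p q z)); auto.
    apply (Hs z Hz). auto.
  - lra.
  - apply (exact_list (fun u => T p q argmu k u rho) L). intros t Ht Ht0. apply HL; auto.
Qed.

Theorem lemma4p1 (p q : nat) (argmu : R) (k : nat) (rho1 rho2 : R) :
  (2 <= q)%nat -> (q < p)%nat -> (k < rr p q)%nat ->
  0 < rho1 -> rho1 < rho2 ->
  all_zeros_simple p q argmu k rho1 ->
  all_zeros_simple p q argmu k rho2 ->
  exists N1 N2 : nat,
    num_zeros p q argmu k rho1 N1 /\ num_zeros p q argmu k rho2 N2 /\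
    (N2 <= N1)%nat.
Proof.
  intros Hq Hp Hk Hr1 Hr12 S1 S2.
  destruct (zero_list p q argmu k rho1 Hq Hp S1) as [l1 [N1 C1]].
  destruct (zero_list p q argmu k rho2 Hq Hp S2) as [l2 [N2 C2]].
  exists (length l1), (length l2). split; [exists l1; auto|]. split; [exists l2; auto|].
  assert (Teq : forall t rho, T p q argmu k t rho = rho * aF p argmu k q t + bF p q t).
  { intros; unfold T, aF, bF; ring. }
  assert (Hd : forall rho t, derivable_pt_lim (fun u => T p q argmu k u rho) t (rho * aF' p argmu k q t + bF' p q t)).
  { intros rho t. unfold T, aF', bF'. apply is_derive_Reals. auto_derive; auto. ring. }
  apply (count_generic _ _ _ _ (nn p q) (mm p q) rho1 rho2 l1 l2 (concrete_hyp p q argmu k Hq Hp) Hr1 Hr12);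
    auto.
  - intros th Hth. apply (S1 th); [rewrite Teq; auto|apply Hd].
  - intros th Hth. apply (S2 th); [rewrite Teq; auto|apply Hd].
  - intro th. rewrite C1, Teq. tauto.
  - intro th. rewrite C2, Teq. tauto.
Qed.
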